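(* Fix real $R_1,R_2\ge1$. For a prime $\ell$ and real $N\ge1$, let $\mathcal{C}'_\ell(N,R_1,R_2)$ be the set of triples $(a,b,c)\in\mathcal{R}_{\mathbb{Z}^3}(N,R_1,R_2)$ that are not $\ell$-carefree. Then \[ \frac{\#\mathcal{C}'_\ell(N,R_1,R_2)}{N}=O\Big(\ell^{-4/3}+\frac1{\sqrt N}\Big), \] with implied constant depending only on $R_1,R_2$ (not on $N$ or $\ell$).
   Context: $\mathcal{R}_{\mathbb{Z}^3}(N,R_1,R_2)=\{(a,b,c)\in\mathbb{Z}_{\ge1}^3:\ ab^{2/3}c<N,\ a/c\in[1,R_1],\ b\in[1,R_2]\}$. A triple $(a,b,c)$ of positive integers is $\ell$-carefree if $\ell^2\nmid ab$, $\ell^2\nmid bc$ and $\ell^2\nmid ca$. *)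

(* Defs.v *)
From HB Require Import structures.
From mathcomp Require Import all_boot all_order all_algebra finmap.
From mathcomp Require Import all_classical all_reals all_analysis.
Set Implicit Arguments. Unset Strict Implicit. Unset Printing Implicit Defensive.
Import Order.TTheory GRing.Theory Num.Theory.
Local Open Scope classical_set_scope.
Local Open Scope ring_scope.

Definition carefree (l a b c : nat) : bool :=
  [&& ~~ (l ^ 2 %| a * b)%N, ~~ (l ^ 2 %| b * c)%N & ~~ (l ^ 2 %| c * a)%N].

Definition RZ3 {R : realType} (N R1 R2 : R) : set (nat * nat * nat) :=
  [set t | [/\ [&& (0 < t.1.1)%N, (0 < t.1.2)%N & (0 < t.2)%N],
     (t.1.1)%:R * ((t.1.2)%:R `^ (2 / 3)) * (t.2)%:R < N,
     ((1 : R) <= (t.1.1)%:R / (t.2)%:R <= R1) &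
     ((1 : R) <= (t.1.2)%:R <= R2)]].

Definition Cprime {R : realType} (l : nat) (N R1 R2 : R) : set (nat * nat * nat) :=
  RZ3 N R1 R2 `&` [set t | ~~ carefree l t.1.1 t.1.2 t.2].

Definition card_Cprime {R : realType} (l : nat) (N R1 R2 : R) : nat :=
  #|` fset_set (Cprime l N R1 R2) |%N.

(* Main.v *)
Require Import Defs.
From HB Require Import structures.
From mathcomp Require Import all_boot all_order all_algebra finmap.
From mathcomp Require Import all_classical all_reals all_analysis.
From mathcomp Require Import zify lra.
From Stdlib Require PeanoNat.
Import Order.TTheory GRing.Theory Num.Theory.

Section NatPart.
Local Open Scope nat_scope.
Lemma count_mult (d m Y : nat) : 0 < d ->
  \sum_(0 <= a < m) [&& 0 < a, a <= Y & d %| a] <= Y %/ d.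
Proof.
move=> d0.
suff: \sum_(0 <= a < m) [&& 0 < a, a <= Y & d %| a] <= (minn Y m.-1) %/ d.
  move=> H; apply: leq_trans H _; apply: leq_div2r; exact: geq_minl.
elim: m => [|m IH]; first by rewrite big_geq.
rewrite big_nat_recr //=.
case: (boolP [&& 0 < m, m <= Y & d %| m]) => /= [/and3P[m0 mY /dvdnP[q mq]]|_].
  have e1 : minn Y m.-1 = m.-1 by apply/minn_idPr; lia.
  have e2 : minn Y m = m by apply/minn_idPr; lia.
  have hq : m %/ d = q by rewrite mq mulnK.
  rewrite e1 in IH; rewrite e2 hq addn1.
  apply: (leq_ltn_trans IH); rewrite ltn_divLR // -mq; lia.
rewrite addn0; apply: leq_trans IH _; apply: leq_div2r.
case: m => [|m] //=; lia.
Qed.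
Lemma sqrt_sq m : Nat.sqrt m * Nat.sqrt m <= m.
Proof. have [H _] := PeanoNat.Nat.sqrt_spec m (PeanoNat.Nat.le_0_l m). by apply/ssrnat.leP. Qed.

Lemma le_sqrt a m : a * a <= m -> a <= Nat.sqrt m.
Proof.
move=> /ssrnat.leP H; have := PeanoNat.Nat.sqrt_le_mono _ _ H.
by rewrite PeanoNat.Nat.sqrt_square => /ssrnat.leP.
Qed.

Lemma sum3_prod (B m : nat) (P Q : nat -> nat) :
  \sum_(0 <= a < m) \sum_(0 <= b < B.+1) \sum_(0 <= c < m) (P a * Q c)
  = B.+1 * ((\sum_(0 <= a < m) P a) * \sum_(0 <= c < m) Q c).
Proof.
under eq_bigr => a _ do rewrite sum_nat_const_nat subn0 -big_distrr /=.
by rewrite -big_distrr /= -big_distrl /=.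
Qed.
Definition Gp (l B r n a b c : nat) : bool :=
  [&& 0 < a, 0 < b, 0 < c, b <= B, c <= a, a <= r * c, a * c <= n
    & ~~ carefree l a b c].

Definition Ia (Z d a : nat) : nat := [&& 0 < a, a <= Z & d %| a].

Lemma sum_Ia Z d m : 0 < d -> \sum_(0 <= a < m) Ia Z d a <= Z %/ d.
Proof. exact: count_mult. Qed.

Lemma bool_or3 (x y z : bool) : (x || y || z : nat) <= x + y + z.
Proof. by case: x; case: y; case: z. Qed.

Lemma main_count l B r n : prime l ->
  (\sum_(0 <= a < n.+1) \sum_(0 <= b < B.+1) \sum_(0 <= c < n.+1) Gp l B r n a b c)
    * l ^ 2 <= 3 * r * B.+1 ^ 3 * n.
Proof.
move=> pl; have l0 := prime_gt0 pl.
set X := Nat.sqrt (r * n); set Y := Nat.sqrt n.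
have hX := sqrt_sq (r * n); have hY := sqrt_sq n.
have facts a c : 0 < c -> c <= a -> a <= r * c -> a * c <= n ->
    [/\ a <= X, c <= Y & a <= r * Y].
  move=> c0 ca ar an.
  have cY : c <= Y by apply: le_sqrt; apply: leq_trans an; apply: leq_mul.
  split => //; last by apply: leq_trans ar _; rewrite leq_mul2l cY orbT.
  apply: le_sqrt; apply: leq_trans (_ : r * (a * c) <= _); last by rewrite leq_mul2l an orbT.
  by rewrite mulnCA mulnC leq_mul2r ar orbT.
have [lB|Bl] := leqP l B.
  apply: (@leq_trans ((B.+1 * ((\sum_(0 <= a < n.+1) Ia (r * Y) 1 a) *
     \sum_(0 <= c < n.+1) Ia Y 1 c)) * l ^ 2)).
    rewrite leq_mul2r; apply/orP; right; rewrite -sum3_prod.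
    apply: leq_sum => a _; apply: leq_sum => b _; apply: leq_sum => c _.
    rewrite /Gp; case: (boolP [&& _, _, _, _, _, _, _ & _]) => //.
    move=> /and5P[a0 b0 c0 bB /and4P[ca ar an _]].
    have [aX cY aY] := facts a c c0 ca ar an.
    by rewrite /Ia a0 c0 aY cY !dvd1n.
  have s1 := @sum_Ia (r * Y) 1 n.+1 (isT : 0 < 1).
  have s2 := @sum_Ia Y 1 n.+1 (isT : 0 < 1).
  rewrite !divn1 in s1 s2.
  have hl : l ^ 2 <= B.+1 ^ 2 by rewrite leq_exp2r //; apply: leq_trans lB _.
  have hp : (\sum_(0 <= a < n.+1) Ia (r * Y) 1 a) * \sum_(0 <= c < n.+1) Ia Y 1 c <= r * n.
    apply: leq_trans (leq_mul s1 s2) _; rewrite -mulnA leq_mul2l hY orbT //.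
  set S := _ * _ in hp.
  have : B.+1 * S * l ^ 2 <= B.+1 * (r * n) * B.+1 ^ 2 by apply: leq_mul => //; apply: leq_mul.
  move=> H; apply: leq_trans H _; rewrite !expnS expn0; nia.
pose f1 a c := Ia X (l ^ 2) a * Ia X 1 c.
pose f2 a c := Ia (r * Y) 1 a * Ia Y (l ^ 2) c.
pose f3 a c := Ia (r * Y) l a * Ia Y l c.
pose T f := \sum_(0 <= a < n.+1) \sum_(0 <= b < B.+1) \sum_(0 <= c < n.+1) (f a c : nat).
have step1 : \sum_(0 <= a < n.+1) \sum_(0 <= b < B.+1) \sum_(0 <= c < n.+1) Gp l B r n a b c
    <= T f1 + T f2 + T f3.
  rewrite /T /= -!(big_split addn) /=; apply: leq_sum => a _.
  rewrite -!big_split /=; apply: leq_sum => b _.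
  apply: leq_sum => c _.
  rewrite /Gp; case: (boolP [&& _, _, _, _, _, _, _ & _]) => //.
  move=> /and5P[a0 b0 c0 bB /and4P[ca ar an nc]].
  have [aX cY aY] := facts a c c0 ca ar an.
  have cX : c <= X by apply: leq_trans ca aX.
  have nlb : ~~ (l %| b).
    apply/negP => /(dvdn_leq b0) lb; move: (leq_trans lb bB); rewrite leqNgt Bl.
    by [].
  have cop : coprime (l ^ 2) b by apply: coprimeXl; rewrite prime_coprime.
  have key : (l ^ 2 %| a) || (l ^ 2 %| c) || ((l %| a) && (l %| c)).
    move: nc; rewrite /carefree !negb_and !negbK => /or3P[h|h|h].
    - by rewrite -(Gauss_dvdl _ cop) h.
    - by rewrite -(Gauss_dvdr c cop) h orbT.
    case: (boolP (l %| a)) => la; case: (boolP (l %| c)) => lc.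
    - by rewrite orbT.
    - have cop2 : coprime (l ^ 2) c by apply: coprimeXl; rewrite prime_coprime.
      by rewrite -(Gauss_dvdr a cop2) h.
    - have cop2 : coprime (l ^ 2) a by apply: coprimeXl; rewrite prime_coprime.
      by rewrite -(Gauss_dvdl c cop2) h orbT.
    - have cop2 : coprime (l ^ 2) a by apply: coprimeXl; rewrite prime_coprime.
      by rewrite -(Gauss_dvdl c cop2) h orbT.
  rewrite /f1 /f2 /f3 /Ia a0 c0 aX cX aY cY !dvd1n /=.
  by case/orP: key => [/orP[->|->]|/andP[-> ->]]; rewrite ?addn1 ?add1n ?addn0 ?muln1 ?mul1n.
apply: leq_trans (leq_mul step1 (leqnn (l ^ 2))) _.
rewrite /T /f1 /f2 /f3 /= !sum3_prod.
have l20 : 0 < l ^ 2 by rewrite expn_gt0 l0.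
have s1 := @sum_Ia X (l ^ 2) n.+1 l20.
have s1' := @sum_Ia X 1 n.+1 isT.
have s2 := @sum_Ia (r * Y) 1 n.+1 isT.
have s2' := @sum_Ia Y (l ^ 2) n.+1 l20.
have s3 := @sum_Ia (r * Y) l n.+1 l0.
have s3' := @sum_Ia Y l n.+1 l0.
rewrite !divn1 in s1' s2.
move: s1 s1' s2 s2' s3 s3'.
set S1 := \sum_(0 <= a < n.+1) Ia X (l ^ 2) a.
set S1' := \sum_(0 <= a < n.+1) Ia X 1 a.
set S2 := \sum_(0 <= a < n.+1) Ia (r * Y) 1 a.
set S2' := \sum_(0 <= a < n.+1) Ia Y (l ^ 2) a.
set S3 := \sum_(0 <= a < n.+1) Ia (r * Y) l a.
set S3' := \sum_(0 <= a < n.+1) Ia Y l a.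
move=> s1 s1' s2 s2' s3 s3'.
have t1 : S1 * l ^ 2 <= X by apply: leq_trans (leq_divM X (l ^ 2)); rewrite leq_mul2r s1 orbT.
have t2 : S2' * l ^ 2 <= Y by apply: leq_trans (leq_divM Y (l ^ 2)); rewrite leq_mul2r s2' orbT.
have t3 : S3 * l <= r * Y by apply: leq_trans (leq_divM (r * Y) l); rewrite leq_mul2r s3 orbT.
have t4 : S3' * l <= Y by apply: leq_trans (leq_divM Y l); rewrite leq_mul2r s3' orbT.
have h1 : S1 * S1' * l ^ 2 <= r * n.
  rewrite mulnAC; apply: leq_trans hX; exact: leq_mul.
have h2 : S2 * S2' * l ^ 2 <= r * n.
  rewrite -mulnA; apply: leq_trans (_ : r * Y * Y <= _); first exact: leq_mul.
  by rewrite -mulnA leq_mul2l hY orbT.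
have h3 : S3 * S3' * l ^ 2 <= r * n.
  have -> : S3 * S3' * l ^ 2 = (S3 * l) * (S3' * l) by rewrite mulnACA expnS expn1.
  apply: leq_trans (_ : r * Y * Y <= _); first exact: leq_mul.
  by rewrite -mulnA leq_mul2l hY orbT.
move: h1 h2 h3; generalize (S1 * S1') (S2 * S2') (S3 * S3') => A1 A2 A3 h1 h2 h3.
have -> : (B.+1 * A1 + B.+1 * A2 + B.+1 * A3) * l ^ 2 = B.+1 * (A1 * l ^ 2 + A2 * l ^ 2 + A3 * l ^ 2) by rewrite -!mulnDr -mulnA !mulnDl.
apply: leq_trans (_ : B.+1 * (3 * (r * n)) <= _); first by rewrite leq_mul2l; apply/orP; right; lia.
rewrite !expnS expn0; nia.
Qed.

Lemma size_filter_sum (T : eqType) (p : pred T) (s : seq T) :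
  size (seq.filter p s) = \sum_(x <- s) (p x : nat).
Proof.
elim: s => [|x s IH] /=; first by rewrite big_nil.
by rewrite big_cons; case: (p x) => /=; rewrite IH.
Qed.
End NatPart.

Local Open Scope ring_scope.

Lemma card_bound (R : realType) (R1 R2 : R) (hR1 : 1 <= R1) (hR2 : 1 <= R2)
  (l : nat) (N : R) : 1 <= N ->
  (card_Cprime l N R1 R2 <=
   \sum_(0 <= a < (Num.truncn N).+1) \sum_(0 <= b < (Num.truncn R2).+1)
     \sum_(0 <= c < (Num.truncn N).+1)
       Gp l (Num.truncn R2) (Num.truncn R1).+1 (Num.truncn N) a b c)%N.
Proof.
move=> N1.
set n := Num.truncn N; set B := Num.truncn R2; set r := (Num.truncn R1).+1.
pose ia := index_iota 0 n.+1; pose ib := index_iota 0 B.+1.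
pose grid := [seq (ab, c) | ab <- [seq (a, b) | a <- ia, b <- ib], c <- ia].
pose G (t : nat * nat * nat) := Gp l B r n t.1.1 t.1.2 t.2.
pose s := seq.filter G grid.
pose F := seq_fset tt s.
have sub : (Cprime l N R1 R2 `<=` [set` F])%classic.
  case=> [[a b] c] [[/= /and3P[a0 b0 c0] hN /andP[ac1 ac2] /andP[b1 b2]] /= nc].
  have N0 : (0 : R) <= N by apply: le_trans N1; exact: ler01.
  have c0R : (0 : R) < c%:R by rewrite ltr0n.
  have bB : (b <= B)%N by rewrite /B truncn_ge_nat // (le_trans ler01 hR2).
  have ca : (c <= a)%N.
    by move: ac1; rewrite ler_pdivlMr // mul1r ler_nat.
  have ar : (a <= r * c)%N.
    rewrite -(ler_nat R) natrM; move: ac2; rewrite ler_pdivrMr // => h.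
    apply: le_trans h _; rewrite ler_wpM2r //.
    by have /andP[_ /ltW] := truncn_itv (le_trans ler01 hR1).
  have acn : (a * c <= n)%N.
    rewrite /n truncn_ge_nat // natrM; apply: ltW; apply: le_lt_trans hN.
    rewrite ler_wpM2r //; rewrite -{1}(mulr1 a%:R) ler_wpM2l //.
    have h1 : (1 : R) <= b%:R by rewrite ler1n.
    have := @ler_powR _ b%:R h1 0 (2 / 3); rewrite powRr0; apply; lra.
  have an : (a <= n)%N by apply: leq_trans acn; rewrite leq_pmulr.
  have cn : (c <= n)%N by apply: leq_trans acn; rewrite leq_pmull // (leq_trans c0 ca).
  rewrite /= /F seq_fsetE /s mem_filter; apply/andP; split.
    by rewrite /G /Gp /= a0 b0 c0 bB ca ar acn nc.
  apply: (allpairs_f (fun ab c => (ab, c))); last by rewrite mem_index_iota.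
  by apply: (allpairs_f (fun a b => (a, b))); rewrite mem_index_iota.
have fin : finite_set [set` F] by exact: finite_fset.
have := sub; rewrite fset_set_sub //; last exact: sub_finite_set sub fin.
rewrite set_fsetK => /fsubset_leq_card h.
rewrite /card_Cprime; apply: leq_trans h _.
rewrite /F size_seq_fset; apply: leq_trans (size_undup _) _.
rewrite /s size_filter_sum /grid. rewrite (@big_allpairs _ _ _ _ _ _ ia (fun x => nat_of_bool (G x))).
rewrite (@big_allpairs _ _ _ _ _ ia ib (fun ab => \big[addn/0%N]_(i2 <- ia) nat_of_bool (G (ab, i2)))).
exact: leqnn.
Qed.

Theorem lemma4p1 (R : realType) (R1 R2 : R) (hR1 : 1 <= R1) (hR2 : 1 <= R2) :
  exists C : R, 0 < C /\
    forall (l : nat) (N : R), prime l -> 1 <= N ->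
      (card_Cprime l N R1 R2)%:R / N
        <= C * ((l%:R) `^ (- (4 / 3)) + 1 / Num.sqrt N).
Proof.
set B := Num.truncn R2; set r := (Num.truncn R1).+1.
exists (3 * r * B.+1 ^ 3)%N%:R; split.
  rewrite ltr0n; apply/ssrnat.ltP; rewrite -!multE; apply: PeanoNat.Nat.mul_pos_pos; [apply: PeanoNat.Nat.mul_pos_pos|]; apply/ssrnat.ltP => //; rewrite expn_gt0.
move=> l N pl N1.
set n := Num.truncn N.
have N0 : (0 : R) < N by apply: lt_le_trans N1; exact: ltr01.
have hn : n%:R <= N by rewrite truncn_le ltW.
have hc := @card_bound R R1 R2 hR1 hR2 l N N1.
have hm := @main_count l B r n pl.
set K := (3 * r * B.+1 ^ 3)%N in hm *.
set S := (\sum_(0 <= a < n.+1) _)%N in hc hm.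
have l0 : (0 : R) < l%:R by rewrite ltr0n prime_gt0.
have l1 : (1 : R) <= l%:R by rewrite ler1n prime_gt0.
have step : (card_Cprime l N R1 R2)%:R / N <= K%:R / l%:R ^+ 2.
  rewrite ler_pdivrMr // mulrAC ler_pdivlMr ?exprn_gt0 //.
  apply: (@le_trans _ _ (S%:R * l%:R ^+ 2)).
    apply: ler_wpM2r; first exact: exprn_ge0 (ltW l0).
    by rewrite ler_nat.
  have h2 : ((S * l ^ 2)%N%:R <= (K * n)%N%:R :> R) by rewrite ler_nat.
  rewrite natrM natrX natrM in h2; apply: le_trans h2 _.
  by rewrite ler_wpM2l.
apply: le_trans step _.
have hp : (l%:R ^+ 2)^-1 <= l%:R `^ (- (4 / 3)) :> R.
  rewrite -powR_invn; last exact: ltW l0.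
  have := @ler_powR _ l%:R l1 (- 2%:R) (- (4 / 3)); apply; lra.
have hs : (0 : R) <= 1 / Num.sqrt N by rewrite divr_ge0 ?sqrtr_ge0.
rewrite ler_wpM2l //; lra.
Qed.
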